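(* Let $N\ge 2$, $p>1$, $0<r_0<R_0\le\infty$, $\Omega=B]r_0,R_0[$, and $V\in C(\Omega)$. Let $u$ be a positive radial strictly monotone $C^2$-subsolution and $v$ a positive radial strictly monotone $C^2$-supersolution of $-\Delta_p w-V|w|^{p-2}w=0$ in $\Omega$, and assume that either $u$ is a strict subsolution or $v$ is a strict supersolution. If $(u/v)'(\rho)=0$ for some $\rho\in\,]r_0,R_0[$, then $(u/v)''(\rho)>0$. In particular, $u/v$ cannot have a local maximum in $B]r_0,R_0[$.
   Context: $\Delta_p w=\nabla\cdot(|\nabla w|^{p-2}\nabla w)$. $B]r_0,R_0[=\{x\in\mathbb{R}^N: r_0<|x|<R_0\}$, $B[r_0,R_0[=\{x: r_0\le|x|<R_0\}$. A $C^2$-subsolution (resp. supersolution) in $\Omega$ is $w\in C^2(B[r_0,R_0[)$ with $-\Delta_p w-V|w|^{p-2}w\le 0$ (resp. $\ge0$) pointwise in $\Omega$; strict means $<0$ (resp. $>0$) at every point of $\Omega$. Radial functions $w(x)=\phi(|x|)$ are identified with $\phi$ and derivatives $'$ are with respect to $r=|x|$; strictly monotone means $w'(r)>0$ for all $r\in[r_0,R_0[$ or $w'(r)<0$ for all $r\in[r_0,R_0[$. *)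

(* Defs.v *)
From HB Require Import structures.
From mathcomp Require Import all_boot all_order all_algebra.
From mathcomp Require Import all_classical all_reals all_analysis.
Set Implicit Arguments. Unset Strict Implicit. Unset Printing Implicit Defensive.
Import Order.TTheory GRing.Theory Num.Theory.
Import numFieldNormedType.Exports.
Local Open Scope classical_set_scope.
Local Open Scope ring_scope.

Section PLap.
Variables (R : realType) (N : nat).
Notation pt := 'rV[R]_N.

Definition enorm (x : pt) : R := Num.sqrt (\sum_(i < N) x ord0 i ^+ 2).

Definition evec (i : 'I_N) : pt := delta_mx ord0 i.
Definition partial (i : 'I_N) (f : pt -> R) (x : pt) : R := 'D_(evec i) f x.

Definition gradnorm (w : pt -> R) (x : pt) : R :=
  Num.sqrt (\sum_(i < N) partial i w x ^+ 2).

Definition plap (p : R) (w : pt -> R) (x : pt) : R :=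
  \sum_(i < N) partial i (fun y => (gradnorm w y) `^ (p - 2) * partial i w y) x.

Definition Lop (p : R) (V : pt -> R) (w : pt -> R) (x : pt) : R :=
  - plap p w x - V x * (`|w x| `^ (p - 2)) * w x.

(* B]r0,R0[  and  B[r0,R0[  (R0 may be +oo) *)
Definition annulus_open (r0 : R) (R0 : \bar R) : set pt :=
  [set x | r0 < enorm x /\ ((enorm x)%:E < R0)%E].
Definition annulus (r0 : R) (R0 : \bar R) : set pt :=
  [set x | r0 <= enorm x /\ ((enorm x)%:E < R0)%E].

(* w in C^2(A), A = B[r0,R0[ with interior O = B]r0,R0[ :
   w is twice differentiable in O, and w, its first and second partial
   derivatives extend continuously to A. *)
Definition C2_on (O A : set pt) (w : pt -> R) : Prop :=
  (forall x, O x -> differentiable w x /\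
                    forall i, differentiable (partial i w) x) /\
  exists (g : 'I_N -> pt -> R) (h : 'I_N -> 'I_N -> pt -> R),
    {within A, continuous w} /\
    (forall i, {within A, continuous g i}) /\
    (forall i j, {within A, continuous h i j}) /\
    (forall x, O x -> (forall i, partial i w x = g i x) /\
                      (forall i j, partial j (partial i w) x = h i j x)).

Definition radial_on (A : set pt) (w : pt -> R) (phi : R -> R) : Prop :=
  forall x, A x -> w x = phi (enorm x).

Definition positive_on (A : set pt) (w : pt -> R) : Prop :=
  forall x, A x -> 0 < w x.

Definition subsolution (p : R) (V : pt -> R) (O : set pt) (w : pt -> R) :=
  forall x, O x -> Lop p V w x <= 0.
Definition strict_subsolution (p : R) (V : pt -> R) (O : set pt) (w : pt -> R) :=
  forall x, O x -> Lop p V w x < 0.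
Definition supersolution (p : R) (V : pt -> R) (O : set pt) (w : pt -> R) :=
  forall x, O x -> 0 <= Lop p V w x.
Definition strict_supersolution (p : R) (V : pt -> R) (O : set pt) (w : pt -> R) :=
  forall x, O x -> 0 < Lop p V w x.

End PLap.

Definition rderiv_at (R : realType) (phi : R -> R) (r l : R) : Prop :=
  (fun h : R => h^-1 * (phi (r + h) - phi r)) @ 0^'+ --> l.

Definition strictly_monotone_radial (R : realType) (r0 : R) (R0 : \bar R)
    (phi : R -> R) : Prop :=
  ((forall r, r0 < r -> (r%:E < R0)%E -> 0 < derive1 phi r) /\
     exists l, rderiv_at phi r0 l /\ 0 < l)
  \/
  ((forall r, r0 < r -> (r%:E < R0)%E -> derive1 phi r < 0) /\
     exists l, rderiv_at phi r0 l /\ l < 0).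

(* Main.v *)
Require Import Defs.
From HB Require Import structures.
From mathcomp Require Import all_boot all_order all_algebra.
From mathcomp Require Import all_classical all_reals all_analysis.
From mathcomp Require Import ring lra.
Import Order.TTheory GRing.Theory Num.Theory.
Import numFieldNormedType.Exports.
Local Open Scope classical_set_scope.
Local Open Scope ring_scope.
Set Implicit Arguments. Unset Strict Implicit. Unset Printing Implicit Defensive.

Section Aux.
Variable R : realType.

Lemma line_is_derive (V : normedModType R) (f : V -> R) (y v : V) (t df : R) :
  is_derive t 1 (fun s => f (s *: v + y)) df -> is_derive (t *: v + y) v f df.
Proof.
case=> H1 H2.
have E : (fun h : R => h^-1 *: (((fun s => f (s *: v + y)) \o shift t) (h *: 1) - f (t *: v + y)))
  = (fun h => h^-1 *: ((f \o shift (t *: v + y)) (h *: v) - f (t *: v + y))).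
  by apply/funext => h /=; rewrite [h%:A]mulr1 scalerDl addrA.
split; first by move: H1; rewrite /derivable E.
by rewrite -H2 /derive E.
Qed.

Lemma line_is_derive' (V : normedModType R) (f : V -> R) (y v : V) (t df : R) :
  is_derive (t *: v + y) v f df -> is_derive t 1 (fun s => f (s *: v + y)) df.
Proof.
case=> H1 H2.
have E : (fun h : R => h^-1 *: (((fun s => f (s *: v + y)) \o shift t) (h *: 1) - f (t *: v + y)))
  = (fun h => h^-1 *: ((f \o shift (t *: v + y)) (h *: v) - f (t *: v + y))).
  by apply/funext => h /=; rewrite [h%:A]mulr1 scalerDl addrA.
split; first by move: H1; rewrite /derivable -E.
by rewrite -H2 /derive -E.
Qed.

Lemma near_itv {T : Type} {F : set_system T} {FF : Filter F} (h : T -> R) (l r0 : R) (R0 : \bar R) :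
  h @ F --> l -> r0 < l -> (l%:E < R0)%E ->
  \forall t \near F, r0 < h t /\ ((h t)%:E < R0)%E.
Proof.
move=> hl r0l lR0.
have H1 := cvgr_gt _ hl _ r0l.
case: R0 lR0 => [r||] //= lr.
- rewrite lte_fin in lr; have H2 := cvgr_lt _ hl _ lr.
  by near=> t; split; [near: t; exact: H1|rewrite lte_fin; near: t; exact: H2].
- by near=> t; split; [near: t; exact: H1|exact: ltry].
Unshelve. all: by end_near. Qed.

Lemma is_derive_mul_id (H : R -> R) :
  H @ (0:R) --> H 0 -> is_derive (0:R) 1 (fun s => s * H s) (H 0).
Proof.
move=> HC.
set q := (fun h : R => h^-1 *: (((fun s => s * H s) \o shift 0) (h *: 1) - 0 * H 0)).
have E : {near (0:R)^', H =1 q}.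
  near=> h; rewrite /q /= [h%:A]mulr1 addr0 mul0r subr0.
  have h0 : h != 0 by near: h; exact: nbhs_dnbhs_neq.
  have sE : forall a b : R, a *: b = a * b by [].
  by rewrite sE mulrA mulVf // mul1r.
have C : q @ (0:R)^' --> H 0.
  apply: cvg_trans (near_eq_cvg E) _.
  exact: (cvg_trans (cvg_app H (cvg_within _)) HC).
split; first by apply/cvg_ex; exists (H 0); exact: C.
by rewrite /derive; apply: cvg_lim.
Unshelve. all: by end_near. Qed.

Lemma powR_mul1 (x a : R) : 0 < x -> x `^ a * x = x `^ (a + 1).
Proof.
move=> x0; rewrite powRD; last by apply/implyP => _; rewrite gt_eqF.
by rewrite powRr1 // ltW.
Qed.

End Aux.

Definition Gp (R : realType) (p : R) (phi : R -> R) (r : R) : R :=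
  `|derive1 phi r| `^ (p - 2) * derive1 phi r.

Lemma alg (R : realType) (p rho V0 a b du dv d2u d2v k : R) (n : nat) :
  1 < p -> 0 < a -> 0 < b -> k != 0 -> du = k * a -> dv = k * b ->
  - ((p - 1) * `|du| `^ (p - 2) * d2u + (`|du| `^ (p - 2) * du / rho) *+ n)
     - V0 * a `^ (p - 2) * a <= 0 ->
  0 <= - ((p - 1) * `|dv| `^ (p - 2) * d2v + (`|dv| `^ (p - 2) * dv / rho) *+ n)
     - V0 * b `^ (p - 2) * b ->
  (- ((p - 1) * `|du| `^ (p - 2) * d2u + (`|du| `^ (p - 2) * du / rho) *+ n)
     - V0 * a `^ (p - 2) * a < 0 \/
   0 < - ((p - 1) * `|dv| `^ (p - 2) * d2v + (`|dv| `^ (p - 2) * dv / rho) *+ n)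
     - V0 * b `^ (p - 2) * b) ->
  0 < b * d2u - a * d2v.
Proof.
move=> p1 apos bpos kne -> ->.
have e1 : `|k * a| `^ (p - 2) = `|k| `^ (p - 2) * a `^ (p - 2).
  by rewrite normrM (gtr0_norm apos) powRM // ltW.
have e2 : `|k * b| `^ (p - 2) = `|k| `^ (p - 2) * b `^ (p - 2).
  by rewrite normrM (gtr0_norm bpos) powRM // ltW.
rewrite e1 e2.
set K := `|k| `^ (p - 2); set A := a `^ (p - 2); set B := b `^ (p - 2).
have Kp : 0 < K by rewrite powR_gt0 // normr_gt0.
have Ap : 0 < A by rewrite powR_gt0.
have Bp : 0 < B by rewrite powR_gt0.
set X := - ((p - 1) * K * d2u + K * k * a / rho * n%:R) - V0 * a.
set Y := - ((p - 1) * K * d2v + K * k * b / rho * n%:R) - V0 * b.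
have eu : - ((p - 1) * (K * A) * d2u + (K * A * (k * a) / rho) *+ n) - V0 * A * a = A * X.
  by rewrite /X; ring.
have ev : - ((p - 1) * (K * B) * d2v + (K * B * (k * b) / rho) *+ n) - V0 * B * b = B * Y.
  by rewrite /Y; ring.
rewrite eu ev (pmulr_rle0 _ Ap) (pmulr_rge0 _ Bp) (pmulr_rlt0 _ Ap) (pmulr_rgt0 _ Bp).
move=> Xle Yge st.
have key : b * X - a * Y = - ((p - 1) * K) * (b * d2u - a * d2v) by rewrite /X /Y; ring.
have : b * X - a * Y < 0.
  case: st => H.
    have H1 : b * X < 0 by rewrite pmulr_rlt0.
    have H2 : 0 <= a * Y by rewrite pmulr_rge0.
    lra.
  have H1 : b * X <= 0 by rewrite pmulr_rle0.
  have H2 : 0 < a * Y by rewrite pmulr_rgt0.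
  lra.
rewrite key mulNr oppr_lt0 pmulr_rgt0 //.
by rewrite mulr_gt0 // subr_gt0.
Qed.

Section Rad.
Variables (R : realType) (n : nat).
Local Notation pt := 'rV[R]_n.+1.

Definition Qn (y : pt) : R := \sum_(i < n.+1) y ord0 i ^+ 2.

Lemma Qn_ge0 y : 0 <= Qn y.
Proof. by apply: sumr_ge0 => i _; exact: sqr_ge0. Qed.

Lemma enormE (y : pt) : enorm y = Num.sqrt (Qn y).
Proof. by []. Qed.

Lemma enorm_ge0 (y : pt) : 0 <= enorm y.
Proof. exact: sqrtr_ge0. Qed.

Lemma enorm_sqr (y : pt) : enorm y ^+ 2 = Qn y.
Proof. by rewrite enormE sqr_sqrtr // Qn_ge0. Qed.

Lemma evecE (i j : 'I_n.+1) : (evec R i : pt) ord0 j = (j == i)%:R.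
Proof. by rewrite /evec mxE eqxx. Qed.

Lemma Qn_line (y : pt) i s : Qn (s *: evec R i + y) = Qn y + 2 * s * y ord0 i + s ^+ 2.
Proof.
rewrite /Qn (bigD1 i) //= [in RHS](bigD1 i) //=.
rewrite !mxE eqxx /=.
rewrite (eq_bigr (fun j => y ord0 j ^+ 2)); last first.
  by move=> j /negbTE ji; rewrite !mxE ji mulr0 add0r.
by rewrite eqxx mulr1; ring.
Qed.

Lemma Qn0 : Qn 0 = 0.
Proof. by rewrite /Qn big1 // => i _; rewrite mxE expr0n. Qed.

Lemma QnZ c (y : pt) : Qn (c *: y) = c ^+ 2 * Qn y.
Proof. by rewrite /Qn mulr_sumr; apply: eq_bigr => i _; rewrite mxE exprMn. Qed.

Lemma enormZ c (y : pt) : enorm (c *: y) = `|c| * enorm y.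
Proof. by rewrite !enormE QnZ sqrtrM ?sqr_ge0 // sqrtr_sqr. Qed.

Lemma enorm_e0 t : enorm (t *: evec R ord0 : pt) = `|t|.
Proof.
rewrite -[t *: _]addr0 enormE Qn_line Qn0 mxE mulr0 !add0r.
by rewrite sqrtr_sqr.
Qed.

Lemma enorm_line (y : pt) i s :
  enorm (s *: evec R i + y) = Num.sqrt (Qn y + 2 * s * y ord0 i + s ^+ 2).
Proof. by rewrite enormE Qn_line. Qed.

Lemma is_derive_enorm_line (y : pt) i : 0 < Qn y ->
  is_derive (0:R) 1 (fun s => enorm (s *: evec R i + y)) (y ord0 i / enorm y).
Proof.
move=> Q0.
pose P : {poly R} := (Qn y)%:P + (2 * y ord0 i) *: 'X + 'X^2.
have EP : (fun s => enorm (s *: evec R i + y)) = Num.sqrt \o horner P.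
  apply/funext => s /=; rewrite enorm_line /P !hornerE; congr Num.sqrt; ring.
rewrite EP.
have P0 : P.[0] = Qn y by rewrite /P !hornerE; ring.
have DP : (deriv P).[0] = 2 * y ord0 i.
  by rewrite /P !(derivD, derivZ, derivC, derivXn, derivX) !hornerE /= !addr0.
have HP := is_derive_poly P 0.
have Q0' : 0 < P.[0] by rewrite P0.
have HS := is_derive1_sqrt Q0'.
have HC := is_derive1_comp HS HP.
apply: (is_derive_eq HC).
rewrite DP P0 enormE.
have : Num.sqrt (Qn y) != 0 by rewrite gt_eqF // sqrtr_gt0.
move=> H; field; done.
Qed.


Local Notation e0 := (evec R (ord0 : 'I_n.+1) : pt).

Lemma open_sub {r0 R0} {y : pt} : annulus_open r0 R0 y -> annulus r0 R0 y.
Proof. by case=> h1 h2; split => //; exact: ltW. Qed.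

Lemma enorm_gt0 {r0 R0} {y : pt} : 0 < r0 -> annulus_open r0 R0 y -> 0 < enorm y.
Proof. by move=> r00 [h1 _]; exact: lt_trans h1. Qed.

Lemma Qn_gt0 {r0 R0} {y : pt} : 0 < r0 -> annulus_open r0 R0 y -> 0 < Qn y.
Proof. by move=> r00 /(enorm_gt0 r00); rewrite enormE sqrtr_gt0. Qed.

Lemma near_line {r0 R0} {y : pt} i : 0 < r0 -> annulus_open r0 R0 y ->
  \forall s \near (0:R), annulus_open r0 R0 (s *: evec R i + y).
Proof.
move=> r00 yA.
have D := is_derive_enorm_line i (Qn_gt0 r00 yA).
have Dd : differentiable (fun s : R => enorm (s *: evec R i + y)) 0.
  by apply/derivable1_diffP; case: D.
have C : (fun s : R => enorm (s *: evec R i + y)) @ (0:R) --> enorm y.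
  have := differentiable_continuous Dd; rewrite /prop_for /continuous_at /= scale0r add0r. by [].
case: yA => h1 h2.
by apply: filterS (near_itv C h1 h2) => s.
Qed.

Lemma near_ray {r0 R0} {r : R} : r0 < r -> (r%:E < R0)%E ->
  \forall s \near r, r0 < s /\ (s%:E < R0)%E.
Proof. by move=> h1 h2; apply: (near_itv (@cvg_id _ _) h1 h2). Qed.

Lemma line_e0 (f : pt -> R) (r : R) : differentiable f (r *: e0) ->
  is_derive r 1 (fun s => f (s *: e0)) ('D_e0 f (r *: e0)).
Proof.
move=> df.
have H := derivableP (diff_derivable (v:=e0) df).
rewrite -[r *: e0]addr0 in H.
have := line_is_derive' H.
rewrite addr0.
have -> : (fun s => f (s *: e0 + 0)) = (fun s => f (s *: e0)).
  by apply/funext => s; rewrite addr0.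
done.
Qed.

Section Radial.
Variables (r0 : R) (R0 : \bar R) (w : pt -> R) (phi : R -> R).
Hypothesis r00 : 0 < r0.
Hypothesis rad : radial_on (annulus r0 R0) w phi.

Lemma ray_in r : r0 < r -> (r%:E < R0)%E -> annulus_open r0 R0 (r *: e0).
Proof.
move=> h1 h2; rewrite /annulus_open /= enorm_e0 gtr0_norm //.
exact: lt_trans h1.
Qed.

Lemma profile_eq r : r0 < r -> (r%:E < R0)%E -> phi r = w (r *: e0).
Proof.
move=> h1 h2; rewrite rad; last exact/open_sub/ray_in.
by rewrite enorm_e0 gtr0_norm // (lt_trans r00 h1).
Qed.

Lemma profile_near r : r0 < r -> (r%:E < R0)%E ->
  \forall s \near r, phi s = w (s *: e0).
Proof.
move=> h1 h2; near=> s; apply: profile_eq.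
  by near: s; apply: filterS (near_ray h1 h2) => s [].
by near: s; apply: filterS (near_ray h1 h2) => s [].
Unshelve. all: by end_near. Qed.

Hypothesis wdiff : forall x, annulus_open r0 R0 x -> differentiable w x.

Lemma profile_is_derive r : r0 < r -> (r%:E < R0)%E ->
  is_derive r 1 phi (partial ord0 w (r *: e0)).
Proof.
move=> h1 h2.
apply: (near_eq_is_derive _ (line_e0 (wdiff (ray_in h1 h2)))).
by near=> s; rewrite (near (profile_near h1 h2) s).
Unshelve. all: by end_near. Qed.

Lemma profile_derive1 r : r0 < r -> (r%:E < R0)%E ->
  derive1 phi r = partial ord0 w (r *: e0).
Proof. by move=> h1 h2; rewrite derive1E; apply: derive_val; exact: profile_is_derive. Qed.

Hypothesis pdiff : forall x, annulus_open r0 R0 x -> differentiable (partial ord0 w) x.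

Lemma profile_is_derive2 r : r0 < r -> (r%:E < R0)%E ->
  is_derive r 1 (derive1 phi) ('D_e0 (partial ord0 w) (r *: e0)).
Proof.
move=> h1 h2.
apply: (near_eq_is_derive _ (line_e0 (pdiff (ray_in h1 h2)))).
near=> s; rewrite profile_derive1 //.
  by near: s; apply: filterS (near_ray h1 h2) => s [].
by near: s; apply: filterS (near_ray h1 h2) => s [].
Unshelve. all: by end_near. Qed.

Lemma radial_partial (y : pt) i : annulus_open r0 R0 y ->
  derivable phi (enorm y) 1 ->
  is_derive y (evec R i) w (derive1 phi (enorm y) * (y ord0 i / enorm y)).
Proof.
move=> yA dphi.
rewrite -[y]add0r -[0 : pt](scale0r (evec R i)).
apply: line_is_derive.
apply: (near_eq_is_derive (f := phi \o (fun s => enorm (s *: evec R i + y)))).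
  near=> s => /=; rewrite rad //; apply: open_sub.
  by near: s; exact: near_line.
rewrite scale0r add0r.
apply: is_derive1_comp; last exact: is_derive_enorm_line (Qn_gt0 r00 yA).
rewrite scale0r add0r derive1E; exact: derivableP.
Unshelve. all: by end_near. Qed.


Lemma partial_rad y i : annulus_open r0 R0 y ->
  partial i w y = derive1 phi (enorm y) * (y ord0 i / enorm y).
Proof.
move=> yA; rewrite /partial; apply: derive_val; apply: radial_partial => //.
by case: (yA) => h1 h2; case: (profile_is_derive h1 h2).
Qed.

Lemma gradnorm_rad y : annulus_open r0 R0 y ->
  gradnorm w y = `|derive1 phi (enorm y)|.
Proof.
move=> yA; rewrite /gradnorm.
under eq_bigr => i _ do rewrite partial_rad //.
set d := derive1 phi (enorm y).
have e0' : enorm y != 0 by rewrite gt_eqF // (enorm_gt0 r00 yA).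
have -> : \sum_(i < n.+1) (d * (y ord0 i / enorm y)) ^+ 2 = (d / enorm y) ^+ 2 * Qn y.
  by rewrite /Qn mulr_sumr; apply: eq_bigr => i _; field.
by rewrite -enorm_sqr -exprMn divfK // sqrtr_sqr.
Qed.

Variable p : R.

Lemma inner_rad y i : annulus_open r0 R0 y ->
  gradnorm w y `^ (p - 2) * partial i w y = Gp p phi (enorm y) * (y ord0 i / enorm y).
Proof. by move=> yA; rewrite gradnorm_rad // partial_rad // /Gp !mulrA. Qed.

Hypothesis sgn : (forall r, r0 < r -> (r%:E < R0)%E -> 0 < derive1 phi r) \/
                 (forall r, r0 < r -> (r%:E < R0)%E -> derive1 phi r < 0).

Lemma Gp_is_derive rho : r0 < rho -> (rho%:E < R0)%E ->
  is_derive rho 1 (Gp p phi)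
    ((p - 1) * `|derive1 phi rho| `^ (p - 2) * derive1 (derive1 phi) rho).
Proof.
move=> h1 h2.
have D2 : is_derive rho 1 (derive1 phi) (derive1 (derive1 phi) rho).
  by rewrite derive1E; apply: derivableP; case: (profile_is_derive2 h1 h2).
have Ep : p - 1 - 1 = p - 2 by ring.
have Ep' : p - 2 + 1 = p - 1 by ring.
case: sgn => [pos|neg].
- have Hp := is_derive1_comp (is_derive1_powR (p - 1) (pos _ h1 h2)) D2.
  rewrite Ep in Hp.
  apply: (near_eq_is_derive _ (is_derive_eq Hp _)); last first.
    by rewrite gtr0_norm ?pos.
  near=> s => /=.
  have [s1 s2] : r0 < s /\ (s%:E < R0)%E by near: s; exact: near_ray.
  by rewrite /Gp gtr0_norm ?pos // powR_mul1 ?pos // Ep'.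
- have xpos : 0 < (- derive1 phi) rho by rewrite /= oppr_gt0 neg.
  have Hn := is_deriveN (is_derive1_comp (is_derive1_powR (p - 1) xpos) (is_deriveN D2)).
  rewrite Ep in Hn.
  apply: (near_eq_is_derive _ (is_derive_eq Hn _)); last first.
    by rewrite ltr0_norm ?neg //= mulrN opprK.
  near=> s => /=.
  have [s1 s2] : r0 < s /\ (s%:E < R0)%E by near: s; exact: near_ray.
  have sn : 0 < - derive1 phi s by rewrite oppr_gt0 neg.
  rewrite /Gp ltr0_norm ?neg //.
  by rewrite -[X in _ = _ * X]opprK mulrN powR_mul1 ?Ep'.
Unshelve. all: by end_near. Qed.


Lemma partial_F0 rho : r0 < rho -> (rho%:E < R0)%E ->
  partial ord0 (fun y => gradnorm w y `^ (p - 2) * partial ord0 w y) (rho *: e0)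
  = (p - 1) * `|derive1 phi rho| `^ (p - 2) * derive1 (derive1 phi) rho.
Proof.
move=> h1 h2; rewrite /partial; apply: derive_val.
set F := (fun y => gradnorm w y `^ (p - 2) * partial ord0 w y).
suff H : is_derive (0:R) 1 (fun s => F (s *: e0 + rho *: e0))
    ((p - 1) * `|derive1 phi rho| `^ (p - 2) * derive1 (derive1 phi) rho).
  by have := line_is_derive H; rewrite scale0r add0r.
have G' : is_derive (shift rho 0) 1 (Gp p phi)
    ((p - 1) * `|derive1 phi rho| `^ (p - 2) * derive1 (derive1 phi) rho).
  by rewrite /shift /= add0r; exact: Gp_is_derive.
have HC := is_derive_eq (is_derive1_comp G' (@is_derive_shift R 0 1 rho)) (mulr1 _).
apply: (near_eq_is_derive _ HC).
have C : (fun s : R => s + rho) @ (0:R) --> rho.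
  by rewrite -[X in _ --> X]add0r; apply: cvgD; [exact: cvg_id|exact: cvg_cst].
near=> s.
have [s1 s2] : r0 < s + rho /\ ((s + rho)%:E < R0)%E.
  by near: s; exact: near_itv C h1 h2.
have sA := ray_in s1 s2.
rewrite /F /= -scalerDl inner_rad // enorm_e0 gtr0_norm ?(lt_trans r00 s1) //.
by rewrite mxE /evec mxE !eqxx mulr1 divff ?mulr1 // gt_eqF // (lt_trans r00 s1).
Unshelve. all: by end_near. Qed.

Lemma partial_Fi rho (j : 'I_n) : r0 < rho -> (rho%:E < R0)%E ->
  partial (lift ord0 j)
    (fun y => gradnorm w y `^ (p - 2) * partial (lift ord0 j) w y) (rho *: e0)
  = Gp p phi rho / rho.
Proof.
move=> h1 h2; rewrite /partial; apply: derive_val.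
set i := lift ord0 j.
set F := (fun y => gradnorm w y `^ (p - 2) * partial i w y).
have rA := ray_in h1 h2.
have rpos : 0 < rho by exact: lt_trans r00 h1.
set N := fun s : R => enorm (s *: evec R i + rho *: e0).
have N0 : N 0 = rho by rewrite /N scale0r add0r enorm_e0 gtr0_norm.
suff H : is_derive (0:R) 1 (fun s => F (s *: evec R i + rho *: e0)) (Gp p phi rho / rho).
  by have := line_is_derive H; rewrite scale0r add0r.
pose H := fun s => Gp p phi (N s) / N s.
have D := is_derive_enorm_line i (Qn_gt0 r00 rA).
have Dd : differentiable N 0 by apply/derivable1_diffP; case: D.
have CN : N @ (0:R) --> N 0 by exact: differentiable_continuous Dd.
have CG : Gp p phi @ (N 0) --> Gp p phi (N 0).
  rewrite N0; apply: differentiable_continuous; apply/derivable1_diffP.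
  by case: (Gp_is_derive h1 h2).
have CH : H @ (0:R) --> H 0.
  apply: cvgM; first exact: cvg_comp CN CG.
  by apply: cvgV => //; rewrite N0 gt_eqF.
have HD := is_derive_mul_id CH.
rewrite /H N0 in HD.
apply: (near_eq_is_derive _ HD).
near=> s.
have sA : annulus_open r0 R0 (s *: evec R i + rho *: e0) by near: s; exact: near_line.
rewrite /F inner_rad // /H /N.
have -> : (s *: evec R i + rho *: e0) ord0 i = s.
  rewrite !mxE /i eqxx /= mulr0 addr0.
  have -> : (lift ord0 j == lift ord0 j) = true by rewrite eqxx.
  by rewrite mulr1.
by rewrite mulrCA.
Unshelve. all: by end_near. Qed.

Lemma plap_rad rho : r0 < rho -> (rho%:E < R0)%E ->
  plap p w (rho *: e0) =
  (p - 1) * `|derive1 phi rho| `^ (p - 2) * derive1 (derive1 phi) rho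
  + (Gp p phi rho / rho) *+ n.
Proof.
move=> h1 h2; rewrite /plap big_ord_recl partial_F0 //.
congr (_ + _).
under eq_bigr => j _ do rewrite partial_Fi //.
by rewrite sumr_const card_ord.
Qed.


Lemma prof_D1 t : r0 < t -> (t%:E < R0)%E -> is_derive t 1 phi (derive1 phi t).
Proof. by move=> h1 h2; rewrite derive1E; apply: derivableP; case: (profile_is_derive h1 h2). Qed.

Lemma prof_D2 t : r0 < t -> (t%:E < R0)%E ->
  is_derive t 1 (derive1 phi) (derive1 (derive1 phi) t).
Proof. by move=> h1 h2; rewrite derive1E; apply: derivableP; case: (profile_is_derive2 h1 h2). Qed.

Lemma Lop_rad (V : pt -> R) rho : r0 < rho -> (rho%:E < R0)%E -> 0 < w (rho *: e0) ->
  Lop p V w (rho *: e0) =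
  - ((p - 1) * `|derive1 phi rho| `^ (p - 2) * derive1 (derive1 phi) rho
     + (Gp p phi rho / rho) *+ n) - V (rho *: e0) * phi rho `^ (p - 2) * phi rho.
Proof.
move=> h1 h2 wpos; rewrite /Lop plap_rad // (gtr0_norm wpos).
by rewrite -(profile_eq h1 h2).
Qed.

End Radial.


Lemma sE (a b : R) : a *: b = a * b. Proof. by []. Qed.

Lemma core (p r0 : R) (R0 : \bar R) (V u v : pt -> R) (phiu phiv : R -> R) :
  1 < p -> 0 < r0 ->
  radial_on (annulus r0 R0) u phiu -> positive_on (annulus r0 R0) u ->
  C2_on (annulus_open r0 R0) (annulus r0 R0) u ->
  strictly_monotone_radial r0 R0 phiu -> subsolution p V (annulus_open r0 R0) u ->
  radial_on (annulus r0 R0) v phiv -> positive_on (annulus r0 R0) v ->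
  C2_on (annulus_open r0 R0) (annulus r0 R0) v ->
  strictly_monotone_radial r0 R0 phiv -> supersolution p V (annulus_open r0 R0) v ->
  strict_subsolution p V (annulus_open r0 R0) u \/
  strict_supersolution p V (annulus_open r0 R0) v ->
  (forall t, r0 < t -> (t%:E < R0)%E ->
     is_derive t 1 (fun r => phiu r / phiv r) (derive1 (fun r => phiu r / phiv r) t)) /\
  (forall rho, r0 < rho -> (rho%:E < R0)%E ->
     derive1 (fun r => phiu r / phiv r) rho = 0 ->
     is_derive rho 1 (derive1 (fun r => phiu r / phiv r))
       (derive1 (derive1 (fun r => phiu r / phiv r)) rho) /\
     0 < derive1 (derive1 (fun r => phiu r / phiv r)) rho).
Proof.
move=> p1 r00 radu posu [C2u _] monu subu radv posv [C2v _] monv supv strict.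
have wdu : forall x, annulus_open r0 R0 x -> differentiable u x by move=> x /C2u [].
have pdu : forall x, annulus_open r0 R0 x -> differentiable (partial ord0 u) x.
  by move=> x /C2u [] _; apply.
have wdv : forall x, annulus_open r0 R0 x -> differentiable v x by move=> x /C2v [].
have pdv : forall x, annulus_open r0 R0 x -> differentiable (partial ord0 v) x.
  by move=> x /C2v [] _; apply.
have sgnu : (forall r, r0 < r -> (r%:E < R0)%E -> 0 < derive1 phiu r) \/
            (forall r, r0 < r -> (r%:E < R0)%E -> derive1 phiu r < 0).
  by case: monu => [[H _]|[H _]]; [left|right].
have sgnv : (forall r, r0 < r -> (r%:E < R0)%E -> 0 < derive1 phiv r) \/
            (forall r, r0 < r -> (r%:E < R0)%E -> derive1 phiv r < 0).
  by case: monv => [[H _]|[H _]]; [left|right].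
have upos t : r0 < t -> (t%:E < R0)%E -> 0 < phiu t.
  by move=> h1 h2; rewrite (profile_eq r00 radu h1 h2); apply: (posu); case: (ray_in r00 h1 h2) => a b; split => //; exact: ltW.
have vpos t : r0 < t -> (t%:E < R0)%E -> 0 < phiv t.
  by move=> h1 h2; rewrite (profile_eq r00 radv h1 h2); apply: (posv); case: (ray_in r00 h1 h2) => a b; split => //; exact: ltW.
set q := fun r => phiu r / phiv r.
have Dq t (h1 : r0 < t) (h2 : (t%:E < R0)%E) :
    is_derive t 1 q (phiu t *: (- (phiv t) ^- 2 *: derive1 phiv t) + (phiv t)^-1 *: derive1 phiu t).
  have vne : phiv t != 0 by rewrite gt_eqF // vpos.
  exact: (is_deriveM (prof_D1 r00 radu wdu h1 h2) (is_deriveV vne (prof_D1 r00 radv wdv h1 h2))).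
have dq_eq t : r0 < t -> (t%:E < R0)%E ->
    derive1 q t = (derive1 phiu t * phiv t - phiu t * derive1 phiv t) / (phiv t ^+ 2).
  move=> h1 h2; have vne : phiv t != 0 by rewrite gt_eqF // vpos.
  rewrite derive1E; case: (Dq t h1 h2) => _ ->.
  by rewrite !sE; field.
split.
  move=> t h1 h2; rewrite derive1E; apply: derivableP; by case: (Dq t h1 h2).
move=> rho h1 h2 dq0.
have Du := prof_D1 r00 radu wdu h1 h2.
have Dv := prof_D1 r00 radv wdv h1 h2.
have D2u := prof_D2 r00 radu wdu pdu h1 h2.
have D2v := prof_D2 r00 radv wdv pdv h1 h2.
have apos := upos _ h1 h2.
have bpos := vpos _ h1 h2.
have vne : (phiv ^+ 2) rho != 0 by rewrite /= mulf_neq0 // gt_eqF.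
have DW := is_deriveB (is_deriveM D2u Dv) (is_deriveM Du D2v).
have Dh := is_deriveV vne (is_deriveX 2 Dv).
have DWh := is_deriveM DW Dh.
have NE : \forall s \near rho,
    ((derive1 phiu * phiv - phiu * derive1 phiv) * (fun y => ((phiv ^+ 2) y)^-1)) s
    = derive1 q s.
  near=> s.
  have [s1 s2] : r0 < s /\ (s%:E < R0)%E by near: s; exact: near_ray.
  by rewrite dq_eq.
have DD := near_eq_is_derive NE DWh.
move: DD; set val := (X in is_derive _ _ _ X) => DD.
have d2E : derive1 (derive1 q) rho = val by rewrite derive1E; case: DD.
split; first by rewrite d2E.
rewrite d2E /val /= !sE.
have W0 : derive1 phiu rho * phiv rho - phiu rho * derive1 phiv rho = 0.
  move: dq0; rewrite dq_eq // => /eqP; rewrite mulf_eq0 invr_eq0 sqrf_eq0 (gt_eqF bpos) orbF.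
  by move/eqP.
have -> : (derive1 phiu * phiv - phiu * derive1 phiv) rho = 0 by exact: W0.
have -> : (phiv ^+ 2) rho = phiv rho ^+ 2 by [].
rewrite mul0r add0r pmulr_rgt0 ?invr_gt0 ?exprn_gt0 //.
rewrite [X in 0 < X](_ : _ = phiv rho * derive1 (derive1 phiu) rho
   - phiu rho * derive1 (derive1 phiv) rho); last by ring.
have dune : derive1 phiu rho != 0.
  by case: sgnu => H; [rewrite gt_eqF ?H | rewrite lt_eqF ?H].
have ane : phiu rho != 0 by rewrite gt_eqF.
set k := derive1 phiu rho / phiu rho.
have Hdu : derive1 phiu rho = k * phiu rho by rewrite /k divfK.
have kne : k != 0 by rewrite /k mulf_neq0 // invr_neq0.
have Hdv : derive1 phiv rho = k * phiv rho.
  have E : derive1 phiu rho * phiv rho = phiu rho * derive1 phiv rho.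
    by apply/eqP; rewrite -subr_eq0 W0.
  rewrite -[derive1 phiv rho](mulKf ane) -E /k. by field.
have ux0 : 0 < u (rho *: evec R ord0) by rewrite -(profile_eq r00 radu h1 h2).
have vx0 : 0 < v (rho *: evec R ord0) by rewrite -(profile_eq r00 radv h1 h2).
have x0A := ray_in r00 h1 h2.
have su := subu _ x0A.
rewrite (Lop_rad r00 radu wdu pdu p sgnu V h1 h2 ux0) in su.
have sv := supv _ x0A.
rewrite (Lop_rad r00 radv wdv pdv p sgnv V h1 h2 vx0) in sv.
have st : Lop p V u (rho *: evec R ord0) < 0 \/ 0 < Lop p V v (rho *: evec R ord0).
  by case: strict => H; [left|right]; apply: H.
rewrite (Lop_rad r00 radu wdu pdu p sgnu V h1 h2 ux0)
        (Lop_rad r00 radv wdv pdv p sgnv V h1 h2 vx0) in st.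
exact: (alg p1 apos bpos kne Hdu Hdv su sv st).
Unshelve. all: by end_near.
Qed.

End Rad.

Theorem lemma3p3 (R : realType) (N : nat) (p r0 : R) (R0 : \bar R)
    (V u v : 'rV[R]_N -> R) (phiu phiv : R -> R) :
  (2 <= N)%N -> 1 < p -> 0 < r0 -> (r0%:E < R0)%E ->
  {within annulus_open r0 R0, continuous V} ->
  radial_on (annulus r0 R0) u phiu ->
  positive_on (annulus r0 R0) u ->
  C2_on (annulus_open r0 R0) (annulus r0 R0) u ->
  strictly_monotone_radial r0 R0 phiu ->
  subsolution p V (annulus_open r0 R0) u ->
  radial_on (annulus r0 R0) v phiv ->
  positive_on (annulus r0 R0) v ->
  C2_on (annulus_open r0 R0) (annulus r0 R0) v ->
  strictly_monotone_radial r0 R0 phiv ->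
  supersolution p V (annulus_open r0 R0) v ->
  strict_subsolution p V (annulus_open r0 R0) u \/
  strict_supersolution p V (annulus_open r0 R0) v ->
  (forall rho : R, r0 < rho -> (rho%:E < R0)%E ->
     derive1 (fun r => phiu r / phiv r) rho = 0 ->
     0 < derive1 (derive1 (fun r => phiu r / phiv r)) rho)
  /\
  ~ (exists x : 'rV[R]_N, annulus_open r0 R0 x /\
       \forall y \near x, u y / v y <= u x / v x).
Proof.
move: V u v; case: N => [//|n] V u v N2 p1 r00 r0R0 Vc radu posu C2u monu subu
  radv posv C2v monv supv strict.
have [Dq D2] := core p1 r00 radu posu C2u monu subu radv posv C2v monv supv strict.
split; first by move=> rho h1 h2 dq0; case: (D2 rho h1 h2 dq0).
set q := fun r => phiu r / phiv r.
case=> x [xA xmax].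
set rho := enorm x.
have [h1 h2] := xA.
have rpos : 0 < rho by exact: lt_trans r00 h1.
pose g := fun t : R => (t / rho) *: x.
have gx : g rho = x by rewrite /g divff ?scale1r // gt_eqF.
have gn t : 0 < t -> enorm (g t) = t.
  by move=> t0; rewrite /g enormZ -/rho gtr0_norm ?divr_gt0 // divfK // gt_eqF.
have gq t : r0 < t -> (t%:E < R0)%E -> q t = u (g t) / v (g t).
  move=> t1 t2; have tpos : 0 < t by exact: lt_trans r00 t1.
  have gA : annulus r0 R0 (g t) by rewrite /annulus /= gn //; split => //; exact: ltW.
  by rewrite /q (radu _ gA) (radv _ gA) gn.
have gC : g @ rho --> x.
  rewrite -[X in _ --> X]gx; apply: cvgZ; last exact: cvg_cst.
  by apply: cvgM; [exact: cvg_id|exact: cvg_cst].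
have Hn : \forall t \near rho, (r0 < t /\ (t%:E < R0)%E) /\ q t <= q rho.
  have P1 := near_ray h1 h2.
  have P2 : \forall t \near rho, u (g t) / v (g t) <= u x / v x := gC _ xmax.
  near=> t; split; first by near: t; exact: P1.
  have [t1 t2] : r0 < t /\ (t%:E < R0)%E by near: t; exact: P1.
  rewrite gq // [q rho]gq // gx.
  by near: t; exact: P2.
move/nbhs_ballP: Hn => [d d0 Hd].
have {}d0 : (0:R) < d := d0.
change (is_true (r0 < rho)) in h1; change (is_true (rho%:E < R0)%E) in h2.
clearbody rho.
have Hb t : `|rho - t| < d -> (r0 < t /\ (t%:E < R0)%E) /\ q t <= q rho.
  by move=> H; apply: Hd.
have Dint t : `|rho - t| < d -> is_derive t 1 q (derive1 q t).
  by move=> /Hb [[t1 t2] _]; exact: Dq.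
have dq0 : derive1 q rho = 0.
  have H : is_derive rho 1 q 0.
    apply: (@derive1_at_max _ q (rho - d) (rho + d) rho).
    - by lra.
    - move=> t; rewrite in_itv /= => /andP [ta tb].
      have : `|rho - t| < d by rewrite ltr_distlC; apply/andP; split; lra.
      by move/Dint; case.
    - by rewrite in_itv /=; apply/andP; split; lra.
    - move=> t; rewrite in_itv /= => /andP [ta tb].
      have : `|rho - t| < d by rewrite ltr_distlC; apply/andP; split; lra.
      by move/Hb => [_].
  by rewrite derive1E; case: H.
have [DD Dpos] := D2 rho h1 h2 dq0.
have Hq : (fun h : R => h^-1 *: ((derive1 q \o shift rho) (h *: 1) - derive1 q rho))
    @ (0:R)^' --> derive1 (derive1 q) rho.
  by case: DD => H1 H2; rewrite -H2; exact: H1.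
have Hpos := @cvgr_gt _ _ _ (dnbhs_filter (0:R)) _ _ Hq _ Dpos.
move: Hpos; rewrite /dnbhs /within /= => /nbhs_ballP [e e0 He].
have {}e0 : (0:R) < e := e0.
have pos' c : rho < c -> c - rho < e -> 0 < derive1 q c.
  move=> c1 c2.
  have hb : ball (0:R) e (c - rho).
    by rewrite /ball /= sub0r normrN gtr0_norm ?subr_gt0.
  have hne : c - rho != 0 by rewrite gt_eqF // subr_gt0.
  have := He (c - rho) hb hne.
  rewrite /= dq0 subr0 sE [(c - rho)%:A]mulr1 subrK.
  by rewrite pmulr_rgt0 // invr_gt0 subr_gt0.
set h0 := Num.min d e / 2.
have h0pos : 0 < h0 by rewrite divr_gt0 // lt_min d0 e0.
have h0d : h0 < d.
  have : Num.min d e <= d by rewrite ge_min lexx.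
  rewrite /h0; lra.
have h0e : h0 < e.
  have : Num.min d e <= e by rewrite ge_min lexx orbT.
  rewrite /h0; lra.
have [c cI cE] : exists2 c, c \in `]rho, rho + h0[%R & q (rho + h0) - q rho = derive1 q c * (rho + h0 - rho).
  apply: MVT; first by lra.
    move=> t; rewrite in_itv /= => /andP [ta tb]; apply: Dint.
    by rewrite ltr_distlC; apply/andP; split; lra.
  apply: derivable_within_continuous => t; rewrite in_itv /= => /andP [ta tb].
  have : `|rho - t| < d by rewrite ltr_distlC; apply/andP; split; lra.
  by move/Dint; case.
move: cI; rewrite in_itv /= => /andP [c1 c2].
have qc := pos' c c1 ltac:(lra).
have : `|rho - (rho + h0)| < d by rewrite ltr_distlC; apply/andP; split; lra.
move/Hb => [_ qle].
have : 0 < derive1 q c * (rho + h0 - rho) by rewrite mulr_gt0 // addrC addKr.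
rewrite -cE; lra.
Unshelve. all: by end_near.
Qed.
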